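(* Let $A$ be an associative algebra over a field $\mathbf{k}$ with identity $1$, let $q\in A$ be an idempotent, and let $(A,q):=\{x\in A \mid qxq=qx\}$. For $a\in (A,q)$ let $a_L:(A,q)\to (A,q)$ be left multiplication, $a_L(x):=ax$. Put $W:=(A,q)^{ann}:=\{qx-x\mid x\in (A,q)\}$ and $q_L$ := left multiplication by $q$ on $(A,q)$. Then $q_L$ is a $W$-idempotent of $End((A,q))$, and the map $\phi:(A,q)\to (End((A,q)),q_L)$, $\phi(a)=a_L$, is an injective invariant homomorphism from the invariant algebra $(A,q)$ to the linear invariant algebra $(End((A,q)),q_L)$ over the vector space $(A,q)$ induced by the $W$-idempotent $q_L$.
   Context: All associative algebras have an identity and algebra homomorphisms preserve it. For an associative algebra $A$ with idempotent $q$, the (right) invariant algebra induced by $q$ is $(A,q):=\{x\in A\mid qxq=qx\}$; it is a subalgebra of $A$ containing $1$ and $q$. For a vector space $V$ with subspace $W$, a $W$-idempotent is a linear map $q:V\to V$ with $q(W)=0$ and $q(v)-v\in W$ for all $v\in V$; the linear invariant algebra over $V$ induced by $q$ is $(End(V),q)=\{f\in End(V)\mid qfq=qf\}$ (equivalently, the linear maps $f$ with $f(W)\subseteq W$). For invariant algebras $(A,q_A)$ and $(B,q_B)$, an invariant homomorphism is a linear map $\phi:(A,q_A)\to(B,q_B)$ with $\phi(xy)=\phi(x)\phi(y)$ for all $x,y$, $\phi(1_A)=1_B$ and $\phi(q_A)=q_B$. *)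

(* Defs.v *)
From HB Require Import structures.
From mathcomp Require Import all_boot all_algebra.
Set Implicit Arguments. Unset Strict Implicit. Unset Printing Implicit Defensive.
Import GRing.Theory.
Local Open Scope ring_scope.

Section InvariantAlgebra.
Variables (K : fieldType) (A : algType K) (q : A).

Definition inv_pred : A -> bool := fun x => q * x * q == q * x.

Lemma inv_pred_submod : subsemimod_closed inv_pred.
Proof.
have H : forall x : A, (x \in inv_pred) = (q * x * q == q * x) by [].
split; first split.
- by rewrite H mulr0 mul0r.
- move=> u v; rewrite !H => /eqP Hu /eqP Hv; apply/eqP.
  by rewrite mulrDr mulrDl Hu Hv.
- move=> a u; rewrite !H => /eqP Hu; apply/eqP.
  by rewrite -scalerAr -scalerAl Hu scalerAr.
Qed.

HB.instance Definition _ := GRing.isSubmodClosed.Build K A inv_pred inv_pred_submod.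

Record invalg := InvAlg { ival :> A; ivalP : inv_pred ival }.
HB.instance Definition _ := [isSub for ival].
HB.instance Definition _ := [Choice of invalg by <:].
HB.instance Definition _ := [SubChoice_isSubLmodule of invalg by <:].

Lemma inv_pred_mul (x y : invalg) : inv_pred (val x * val y).
Proof.
case: x y => x /eqP Hx [y /eqP Hy] /=; apply/eqP.
have Hy' : q * (y * q) = q * y by rewrite mulrA.
have -> : q * (x * y) * q = (q * x * q) * (y * q) by rewrite Hx !mulrA.
by rewrite -!mulrA Hy' !mulrA Hx.
Qed.

Definition inv_mul (x y : invalg) : invalg := InvAlg (inv_pred_mul x y).

Definition lmul (a : invalg) : invalg -> invalg := fun x => inv_mul a x.

Section Idempotent.
Variable (hq : q * q = q).

Lemma inv_pred_q : inv_pred q.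
Proof. by rewrite /inv_pred hq; apply/eqP. Qed.

Lemma inv_pred_1 : inv_pred 1.
Proof. by rewrite /inv_pred mulr1 hq; apply/eqP. Qed.

Definition qelt : invalg := InvAlg inv_pred_q.
Definition oneelt : invalg := InvAlg inv_pred_1.

Definition qL : invalg -> invalg := lmul qelt.

End Idempotent.

Definition Wann (w : invalg) : Prop :=
  exists x : invalg, val w = q * val x - val x.


End InvariantAlgebra.

Definition is_subspace (K : fieldType) (V : lmodType K) (W : V -> Prop) : Prop :=
  W 0 /\ forall (a : K) (u v : V), W u -> W v -> W (a *: u + v).

Definition W_idempotent (K : fieldType) (V : lmodType K) (W : V -> Prop)
  (p : V -> V) : Prop :=
  linear p /\ (forall w, W w -> p w = 0) /\ (forall v, W (p v - v)).

Definition in_lin_inv_alg (K : fieldType) (V : lmodType K) (p : V -> V)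
  (f : V -> V) : Prop :=
  linear f /\ p \o f \o p =1 p \o f.

(* Main.v *)
Require Import Defs.
From HB Require Import structures.
From mathcomp Require Import all_boot all_algebra.
Import GRing.Theory.
Local Open Scope ring_scope.

Theorem proposition1p1 (K : fieldType) (A : algType K) (q : A)
  (hq : q * q = q) :
  (* W = (A,q)^ann is a subspace of (A,q) *)
  is_subspace (@Wann K A q)
  (* q_L is a W-idempotent of End((A,q)) *)
  /\ W_idempotent (@Wann K A q) (qL hq)
  (* phi(a) = a_L lands in the linear invariant algebra (End((A,q)), q_L) *)
  /\ (forall a : invalg q, in_lin_inv_alg (qL hq) (lmul a))
  (* phi is linear *)
  /\ (forall (k : K) (a b : invalg q),
        lmul (k *: a + b) =1 (fun x => k *: lmul a x + lmul b x))
  (* phi is multiplicative *)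
  /\ (forall a b : invalg q, lmul (inv_mul a b) =1 lmul a \o lmul b)
  (* phi(1) = id_{(A,q)} *)
  /\ lmul (oneelt hq) =1 id
  (* phi(q) = q_L *)
  /\ lmul (qelt hq) =1 qL hq
  (* phi is injective *)
  /\ (forall a b : invalg q, lmul a =1 lmul b -> a = b).
Proof.
Proof.
have vE : forall x y : invalg q, val x = val y -> x = y by move=> x y; apply: val_inj.
have lmulE : forall a x : invalg q, val (lmul a x) = val a * val x by [].
have valD : forall x y : invalg q, val (x + y) = val x + val y by [].
have valZ : forall (k : K) (x : invalg q), val (k *: x) = k *: val x by [].
have valN : forall x : invalg q, val (- x) = - val x by [].
have val0 : val (0 : invalg q) = 0 by [].
split.
  split; first by exists 0; rewrite val0 mulr0 subr0.
  move=> k u v [x Hx] [y Hy]; exists (k *: x + y).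
  rewrite valD valZ Hx Hy valD valZ mulrDr -scalerAr; rewrite scalerBr; by rewrite addrACA opprD.
split.
  split; first by move=> k u v; apply: vE; rewrite /qL lmulE !valD valZ lmulE /= mulrDr -scalerAr.
  split.
    move=> w [x Hx]; apply: vE; rewrite /qL lmulE Hx val0 /= mulrBr mulrA hq subrr //.
  by move=> v; exists v; rewrite valD valN /qL lmulE.
split.
  move=> a; split.
    by move=> k u v; apply: vE; rewrite lmulE !valD valZ !lmulE mulrDr -scalerAr.
  move=> x; apply: vE; rewrite /= /qL /=.
  case: a => a /eqP Ha /=.
  by rewrite !mulrA Ha.
split.
  by move=> k a b x; apply: vE; rewrite lmulE !valD valZ !lmulE mulrDl -scalerAl.
split.
  by move=> a b x; apply: vE; rewrite /= mulrA.
split.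
  by move=> x; apply: vE; rewrite lmulE /= mul1r.
split; first by [].
move=> a b H; have := H (oneelt hq) => /(congr1 val); rewrite !lmulE /= !mulr1.
exact: vE.
Qed.
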